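(* Let $X$ be a $\mathbb{Z}^n$-periodic discrete metric space with $N$ orbits and let $p\in[1,\infty]$. Then the map $A\mapsto UAU^{-1}$ is an isomorphism of Banach algebras from $\mathcal{A}_p(X)$ onto $\mathcal{A}_p(\mathbb{Z}^n,\mathbb{C}^N)$.
   Context: A discrete metric space is a countable set $X$ with a metric $\rho$ such that every ball is finite. It is $\mathbb{Z}^n$-periodic if $\mathbb{Z}^n$ acts on $X$ by $\rho$-isometries, $(\alpha,x)\mapsto\alpha\cdot x$ (with $0\cdot x=x$, $(\alpha+\beta)\cdot x=\alpha\cdot(\beta\cdot x)$), freely, with finitely many orbits; $x_1,\dots,x_N$ are fixed orbit representatives. $U:l^p(X)\to l^p(\mathbb{Z}^n,\mathbb{C}^N)$, $(Uf)(\alpha)=(f(\alpha\cdot x_1),\dots,f(\alpha\cdot x_N))$. A band operator on $l^p(X)$ is a linear operator $A$ with bounded generating function $k_A$ (i.e. $(Au)(x)=\sum_y k_A(x,y)u(y)$ for finitely supported $u$) such that $k_A(x,y)=0$ whenever $\rho(x,y)>R$ for some $R$. $\mathcal{A}_p(X)$ is the closure in $\mathcal{L}(l^p(X))$ of the band operators. A band operator on $l^p(\mathbb{Z}^n,\mathbb{C}^N)$ is an operator $\sum_{|\alpha|\le m}a_\alpha V_\alpha$ with $a_\alpha\in l^\infty(\mathbb{Z}^n,\mathbb{C}^{N\times N})$ acting by multiplication and $(V_\alpha u)(x)=u(x-\alpha)$; $\mathcal{A}_p(\mathbb{Z}^n,\mathbb{C}^N)$ is the closure of these in $\mathcal{L}(l^p(\mathbb{Z}^n,\mathbb{C}^N))$.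 *)

(* Defs.v *)
From mathcomp Require Import all_boot all_order all_algebra.
From mathcomp Require Import all_classical all_reals all_analysis.
From mathcomp Require Import complex.
Set Implicit Arguments. Unset Strict Implicit. Unset Printing Implicit Defensive.
Import Order.TTheory GRing.Theory Num.Theory.
Local Open Scope classical_set_scope.
Local Open Scope ring_scope.

Section Defs.
Variable R : realType.
Local Notation C := (R[i]).
Local Notation normc := (@Normc.normc R).

Definition lpnorm (I : choiceType) (p : \bar R) (f : I -> C) : \bar R :=
  match p with
  | +oo%E => ereal_sup ([set 0%E] `|` [set (normc (f i))%:E | i in [set: I]])
  | (r%:E)%E => poweR (\esum_(i in [set: I]) ((normc (f i)) `^ r)%:E)%E r^-1
  | -oo%E => +oo%E
  end.

Definition in_lp (I : choiceType) (p : \bar R) (f : I -> C) : Prop :=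
  (lpnorm p f < +oo)%E.

Definition opnorm (I J : choiceType) (p : \bar R) (A : (I -> C) -> (J -> C))
  : \bar R :=
  ereal_sup ([set 0%E] `|` [set lpnorm p (A f) | f in [set f | (lpnorm p f <= 1)%E]]).

(* A is (the restriction to l^p(I) of) an element of L(l^p(I)):
   linear on l^p, maps l^p to l^p, and bounded. *)
Definition bounded_op (I : choiceType) (p : \bar R) (A : (I -> C) -> (I -> C))
  : Prop :=
  [/\ (forall f g, in_lp p f -> in_lp p g ->
         A (fun i => f i + g i) = (fun i => A f i + A g i)),
      (forall (c : C) f, in_lp p f -> A (fun i => c * f i) = (fun i => c * A f i)),
      (forall f, in_lp p f -> in_lp p (A f)) &
      (opnorm p A < +oo)%E].

Definition opsub (I J : Type) (A B : (I -> C) -> (J -> C)) : (I -> C) -> (J -> C) :=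
  fun f j => A f j - B f j.

Definition op_closure (I : choiceType) (p : \bar R)
  (S : ((I -> C) -> (I -> C)) -> Prop) (A : (I -> C) -> (I -> C)) : Prop :=
  bounded_op p A /\
  forall eps : R, 0 < eps ->
    exists B, S B /\ (opnorm p (opsub A B) < eps%:E)%E.

Definition is_metric (X : Type) (rho : X -> X -> R) : Prop :=
  [/\ (forall x y, 0 <= rho x y),
      (forall x y, rho x y = 0 <-> x = y),
      (forall x y, rho x y = rho y x) &
      (forall x y z, rho x z <= rho x y + rho y z)].

Definition balls_finite (X : Type) (rho : X -> X -> R) : Prop :=
  forall (x : X) (r : R), finite_set [set y | rho x y <= r].

Definition Zn (n : nat) := 'rV[int]_n.

Definition periodic_action (n : nat) (X : Type) (rho : X -> X -> R)
  (act : Zn n -> X -> X) : Prop :=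
  [/\ (forall x, act 0 x = x),
      (forall a b x, act (a + b) x = act a (act b x)),
      (forall a x y, rho (act a x) (act a y) = rho x y) &
      (forall a x, act a x = x -> a = 0)].

Definition orbit_reps (n N : nat) (X : Type) (act : Zn n -> X -> X)
  (reps : 'I_N -> X) : Prop :=
  (forall x, exists (a : Zn n) (j : 'I_N), act a (reps j) = x) /\
  (forall (a : Zn n) (i j : 'I_N), act a (reps i) = reps j -> i = j).

(* A band operator on l^p(X): a bounded linear operator given by a bounded
   generating function k with band width r:  (Au)(x) = sum_y k(x,y) u(y)
   (the sum is finite, as k(x,.) vanishes outside the finite ball B(x,r)). *)
Definition band_op_X (X : choiceType) (rho : X -> X -> R) (p : \bar R)
  (A : (X -> C) -> (X -> C)) : Prop :=
  bounded_op p A /\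
  exists (k : X -> X -> C) (M r : R),
    [/\ (forall x y, normc (k x y) <= M),
        (forall x y, r < rho x y -> k x y = 0) &
        (forall u, in_lp p u ->
           A u = (fun x => \sum_(y \in [set y | rho x y <= r]) k x y * u y))].

Definition Ap_X (X : choiceType) (rho : X -> X -> R) (p : \bar R) :=
  op_closure p (band_op_X rho p).

(* A function Z^n -> C^N is represented (curried form) as a function on
   Z^n * 'I_N; its l^p norm is (sum_alpha sum_j |u(alpha)_j|^p)^(1/p),
   resp. sup_{alpha, j} |u(alpha)_j|. *)

Definition box (n m : nat) : set (Zn n) :=
  [set a | forall k : 'I_n, (`|a ord0 k| <= m)%N].

(* band operator  sum_{|alpha| <= m} a_alpha V_alpha  with
   a_alpha in l^oo(Z^n, C^{N x N}) and (V_alpha u)(x) = u(x - alpha) *)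
Definition band_op_Z (n N : nat) (p : \bar R)
  (B : (Zn n * 'I_N -> C) -> (Zn n * 'I_N -> C)) : Prop :=
  exists (m : nat) (a : Zn n -> Zn n -> 'M[C]_N),
    (forall alpha, exists M : R, forall x i j, normc (a alpha x i j) <= M) /\
    (forall u, in_lp p u ->
       B u = (fun xi => \sum_(alpha \in @box n m)
                          \sum_(j < N) a alpha xi.1 xi.2 j * u (xi.1 - alpha, j))).

Definition Ap_Z (n N : nat) (p : \bar R) :=
  op_closure p (@band_op_Z n N p).

Definition Uop (n N : nat) (X : Type) (act : Zn n -> X -> X) (reps : 'I_N -> X)
  (f : X -> C) : Zn n * 'I_N -> C :=
  fun aj => f (act aj.1 (reps aj.2)).

(* U^{-1} g (alpha . x_j) = g(alpha)_j *)
Definition Uinv (n N : nat) (X : Type) (act : Zn n -> X -> X) (reps : 'I_N -> X)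
  (g : Zn n * 'I_N -> C) : X -> C :=
  fun x => match pselect (exists aj : Zn n * 'I_N, act aj.1 (reps aj.2) = x) with
           | left H => g (proj1_sig (cid H))
           | right _ => 0
           end.

Definition conjU (n N : nat) (X : Type) (act : Zn n -> X -> X) (reps : 'I_N -> X)
  (A : (X -> C) -> (X -> C)) : (Zn n * 'I_N -> C) -> (Zn n * 'I_N -> C) :=
  fun g => Uop act reps (A (Uinv act reps g)).

End Defs.

(* Main.v *)
Require Import Defs.
From mathcomp Require Import all_boot all_order all_algebra.
From mathcomp Require Import all_classical all_reals all_analysis.
From mathcomp Require Import complex.
From mathcomp Require Import lra zify.
Import Order.TTheory GRing.Theory Num.Theory.
Local Open Scope classical_set_scope.
Local Open Scope ring_scope.

Section S.
Variable R : realType.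
Local Notation C := (R[i]).
Local Notation normc := (@Normc.normc R).

Lemma normcE (z : C) : (normc z)%:C%C = `|z|.
Proof. by case: z => a b; rewrite normc_def. Qed.

Lemma normc_ge0 (z : C) : 0 <= normc z.
Proof. by rewrite -(lecR 0) normcE; exact: (normr_ge0 z). Qed.

Lemma normcD (x y : C) : normc (x + y) <= normc x + normc y.
Proof. by rewrite -lecR rmorphD /= !normcE ler_normD. Qed.

Lemma normcN (x : C) : normc (- x) = normc x.
Proof. by apply: complexI; rewrite !normcE normrN. Qed.

Lemma normc_0 : normc (0 : C) = 0.
Proof. by apply: complexI; rewrite normcE normr0. Qed.

Lemma normcR (x : R) : normc (x%:C%C) = `|x|.
Proof. by rewrite /= expr0n /= addr0 sqrtr_sqr. Qed.


Section LP.
Local Open Scope ereal_scope.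

Lemma lpnorm_ge0 (I : choiceType) p (f : I -> C) : 0 <= lpnorm p f.
Proof.
case: p => [r||] /=; first exact: poweR_ge0.
- by apply: ereal_sup_ubound; left.
- by [].
Qed.

Lemma lpnorm_bij (I J : choiceType) (e : I -> J) p (f : J -> C) :
  set_bij setT setT e -> lpnorm p (f \o e) = lpnorm p f.
Proof.
move=> Hb; case: p => [r||] //=.
- by rewrite (reindex_esum _ _ e _ Hb).
- congr ereal_sup; congr setU; apply/seteqP; split => _ [i _ <-].
    by exists (e i).
  by case: Hb => _ _ /(_ i Logic.I) [j _ <-]; exists j.
Qed.

Lemma esumZ_le (I : choiceType) (S : set I) (c : R) (a : I -> \bar R) :
  (0 <= c)%R -> (forall i, 0 <= a i) ->
  \esum_(i in S) (c%:E * a i) <= c%:E * \esum_(i in S) a i.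
Proof.
move=> c0 a0; apply: ge_ereal_sup => _ [X XS <-].
rewrite -ge0_mule_fsumr //; apply: lee_wpmul2l; first by rewrite lee_fin.
by apply: ereal_sup_ubound; exists X.
Qed.

Lemma normc_le_lpnormy (I : choiceType) (f : I -> C) i :
  (normc (f i))%:E <= lpnorm +oo f.
Proof. by apply: ereal_sup_ubound; right; exists i. Qed.

Lemma lpnormZ_le (I : choiceType) p (c : C) (f : I -> C) : 1 <= p ->
  lpnorm p (fun i => (c * f i)%R) <= (normc c)%:E * lpnorm p f.
Proof.
case: p => [r||] // r1 /=.
- have r0 : (0 < r)%R by apply: (@lt_le_trans _ _ 1%R) => //; rewrite -lee_fin.
  have E : forall i, (normc (c * f i)%R `^ r)%:E =
    (normc c `^ r)%:E * (normc (f i) `^ r)%:E.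
    by move=> i; rewrite Normc.normcM powRM ?normc_ge0.
  rewrite (eq_esum (b := fun i => (normc c `^ r)%:E * (normc (f i) `^ r)%:E));
    last by move=> i _; rewrite E.
  apply: (@le_trans _ _ (((normc c `^ r)%:E * \esum_(i in setT) (normc (f i) `^ r)%:E) `^ r^-1)).
    apply: gt0_ler_poweR; first by rewrite invr_ge0 ltW.
    + rewrite in_itv /= leey andbT; apply: esum_ge0 => i _.
      by apply: mule_ge0; rewrite lee_fin powR_ge0.
    + rewrite in_itv /= leey andbT; apply: mule_ge0; first by rewrite lee_fin powR_ge0.
      by apply: esum_ge0 => i _; rewrite lee_fin powR_ge0.
    + by apply: esumZ_le => //; [apply: powR_ge0 | move=> i; rewrite lee_fin powR_ge0].
  rewrite poweRM; first last.
  + by apply: esum_ge0 => i _; rewrite lee_fin powR_ge0.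
  + by rewrite lee_fin powR_ge0.
  rewrite poweR_EFin -powRrM mulfV ?gt_eqF // powRr1 ?normc_ge0 //.
- apply: ge_ereal_sup => _ [/= -> | [i _ <-]].
    apply: mule_ge0; [by rewrite lee_fin normc_ge0 | by apply: ereal_sup_ubound; left].
  rewrite /= Normc.normcM EFinM; apply: lee_wpmul2l; first by rewrite lee_fin normc_ge0.
  exact: normc_le_lpnormy.
Qed.

Lemma powR_sum_le (x y z r : R) : (0 <= x)%R -> (0 <= y)%R -> (0 <= z)%R -> (0 <= r)%R ->
  (z <= x + y)%R -> (z `^ r <= 2 `^ r * (x `^ r + y `^ r))%R.
Proof.
wlog xy : x y / (x <= y)%R.
  move=> W x0 y0 z0 r0 zxy; have [xy|yx] := leP x y; first exact: W.
  by rewrite addrC; apply: W => //; [exact: ltW | rewrite addrC].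
move=> x0 y0 z0 r0 zxy.
have : (z `^ r <= (2 * y) `^ r)%R.
  apply: ge0_ler_powR => //; rewrite ?nnegrE //; first by rewrite mulr_ge0.
  by apply: (le_trans zxy); rewrite mulr2n mulrDl mul1r lerD2r.
rewrite powRM //= => H; apply: (le_trans H).
have h1 := powR_ge0 2 r; have h2 := powR_ge0 x r; nra.
Qed.


Lemma poweR_le_inv (S : \bar R) (a r : R) : (0 < r)%R -> (0 <= a)%R -> 0 <= S ->
  poweR S r^-1 <= a%:E -> S <= (a `^ r)%:E.
Proof.
move=> r0 a0 S0 H.
have := @gt0_ler_poweR R r (ltW r0) (poweR S r^-1) a%:E.
rewrite !in_itv /= !leey !andbT poweR_ge0 lee_fin a0 => /(_ isT isT H).
by rewrite -poweRrM mulVf ?gt_eqF // poweRe1 // poweR_EFin.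
Qed.

Lemma lp_sub_fin (I : choiceType) p (a : R) : 1 <= p -> (0 <= a)%R ->
  exists K : R, forall g h : I -> C, lpnorm p g <= a%:E -> lpnorm p h <= a%:E ->
    lpnorm p (fun i => (g i - h i)%R) <= K%:E.
Proof.
case: p => [r||] // r1 a0.
- have r0 : (0 < r)%R by apply: (@lt_le_trans _ _ 1%R) => //; rewrite -lee_fin.
  exists ((2 `^ r * (a `^ r + a `^ r)) `^ r^-1)%R => g h Hg Hh /=.
  rewrite -poweR_EFin; apply: gt0_ler_poweR; first by rewrite invr_ge0 ltW.
  + by rewrite in_itv /= leey andbT; apply: esum_ge0 => i _; rewrite lee_fin powR_ge0.
  + by rewrite in_itv /= leey andbT lee_fin mulr_ge0 ?addr_ge0 ?powR_ge0.
  have E0 : forall f : I -> C, 0 <= \esum_(i in setT) (normc (f i) `^ r)%:E.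
    by move=> f; apply: esum_ge0 => i _; rewrite lee_fin powR_ge0.
  have Sg := poweR_le_inv _ _ _ r0 a0 (E0 g) Hg.
  have Sh := poweR_le_inv _ _ _ r0 a0 (E0 h) Hh.
  apply: (@le_trans _ _ (\esum_(i in setT)
     ((2 `^ r)%:E * ((normc (g i) `^ r)%:E + (normc (h i) `^ r)%:E)))).
    apply: le_esum => i _; rewrite -EFinD -EFinM lee_fin.
    apply: powR_sum_le; [exact: normc_ge0|exact: normc_ge0|exact: normc_ge0|exact: ltW r0|].
    by rewrite /=; apply: (le_trans (normcD _ _)); rewrite normcN.
  apply: le_trans; first apply: esumZ_le.
  - exact: powR_ge0.
  - by move=> i; rewrite adde_ge0 // lee_fin powR_ge0.
  rewrite esumD; first last.
  + by move=> i _; rewrite lee_fin powR_ge0.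
  + by move=> i _; rewrite lee_fin powR_ge0.
  rewrite EFinM EFinD; apply: lee_wpmul2l; first by rewrite lee_fin powR_ge0.
  exact: leeD.
- exists (a + a)%R => g h Hg Hh; apply: ge_ereal_sup => _ [/= -> | [i _ <-]].
    by rewrite lee_fin addr_ge0.
  rewrite lee_fin; apply: (le_trans (normcD _ _)); rewrite normcN.
  apply: lerD; rewrite -lee_fin.
    exact: (le_trans (normc_le_lpnormy _ g i)).
  exact: (le_trans (normc_le_lpnormy _ h i)).
Qed.

End LP.

Section Transport.
Variables (I J : choiceType) (p : \bar R).
Variables (T : (I -> C) -> (J -> C)) (S : (J -> C) -> (I -> C)).
Hypothesis TS : forall g, T (S g) = g.
Hypothesis ST : forall f, S (T f) = f.
Hypothesis Tn : forall f, lpnorm p (T f) = lpnorm p f.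
Hypothesis Tadd : forall f g, T (fun i => f i + g i) = (fun j => T f j + T g j).
Hypothesis TZ : forall c f, T (fun i => c * f i) = (fun j => c * T f j).

Lemma Sn g : lpnorm p (S g) = lpnorm p g.
Proof. by rewrite -Tn TS. Qed.

Lemma Sadd f g : S (fun i => f i + g i) = (fun j => S f j + S g j).
Proof. by rewrite -[in LHS](TS f) -[in LHS](TS g) -Tadd ST. Qed.

Lemma SZ c f : S (fun i => c * f i) = (fun j => c * S f j).
Proof. by rewrite -[in LHS](TS f) -TZ ST. Qed.

Lemma Tsub f g : T (fun i => f i - g i) = (fun j => T f j - T g j).
Proof.
have -> : (fun i => f i - g i) = (fun i => f i + (fun i => -1 * g i) i).
  by apply/funext => i; rewrite mulN1r.
by rewrite Tadd TZ; apply/funext => j; rewrite mulN1r.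
Qed.

Definition conjT (A : (I -> C) -> (I -> C)) : (J -> C) -> (J -> C) :=
  fun g => T (A (S g)).

Lemma conjT_opsub A B : conjT (opsub A B) = opsub (conjT A) (conjT B).
Proof. by apply/funext => g; rewrite /conjT /opsub Tsub. Qed.

Lemma conjT_opnorm A : opnorm p (conjT A) = opnorm p A.
Proof.
rewrite /opnorm; congr ereal_sup; congr setU; apply/seteqP; split.
  move=> _ [g /= Hg <-]; exists (S g); first by rewrite /= Sn.
  by rewrite /conjT Tn.
move=> _ [f /= Hf <-]; exists (T f); first by rewrite /= Tn.
by rewrite /conjT ST Tn.
Qed.

Lemma conjT_bounded A : bounded_op p A -> bounded_op p (conjT A).
Proof.
case=> Ha Hz Hl Hn; split.
- move=> f g Hf Hg; rewrite /conjT Sadd Ha ?Tadd // /in_lp Sn //.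
- move=> c f Hf; rewrite /conjT SZ Hz ?TZ // /in_lp Sn //.
- by move=> f Hf; rewrite /in_lp /conjT Tn; apply: Hl; rewrite /in_lp Sn.
- by rewrite conjT_opnorm.
Qed.

End Transport.

Section Finite.

Lemma box_finite n m : finite_set (@box n m).
Proof.
pose e := fun t : {ffun 'I_n -> 'I_(m + m).+1} =>
  (\row_k (((t k : nat)%:Z - m%:Z)%R) : Zn n).
apply: (@sub_finite_set _ _ (e @` setT)); last exact: finite_image finite_finset.
move=> a Ha; exists [ffun k => inord (`|(a ord0 k + m%:Z)%R|%N)] => //.
apply/rowP => k; rewrite mxE ffunE inordK; have := Ha k; rewrite /=.
  move=> h; have -> : a 0 k = a ord0 k by congr (a _ k); apply: val_inj.
  lia.
move=> h; lia.
Qed.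

Lemma fin_box n (S : set (Zn n)) : finite_set S -> exists m, S `<=` @box n m.
Proof.
move/finite_fsetP => [F ->].
have : forall s : seq (Zn n), exists m, forall a, a \in s -> @box n m a.
  elim => [|x s [m Hm]]; first by exists 0%N.
  exists (maxn m (\max_(k < n) `|x ord0 k|%N)) => a; rewrite in_cons.
  case/orP => [/eqP -> | /Hm Ha] k.
    by apply: (leq_trans _ (leq_maxr _ _)); exact: (@leq_bigmax _ (fun k : 'I_n => `|x ord0 k|%N) k).
  by apply: (leq_trans (Ha k)); apply: leq_maxl.
move=> /(_ (finmap.enum_fset F)) [m Hm]; exists m => a /= aF; exact: Hm.
Qed.

Lemma fin_unif (T : choiceType) (U : Type) (S : set T) (f : T -> U -> R) :
  finite_set S -> (forall s, S s -> exists M, forall t, f s t <= M) ->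
  exists M, forall s, S s -> forall t, f s t <= M.
Proof.
move/finite_fsetP => [F ->] H.
have : forall s : seq T, (forall x, x \in s -> exists M, forall t, f x t <= M) ->
    exists M, forall x, x \in s -> forall t, f x t <= M.
  elim => [|x s IH] Hs; first by exists 0.
  have [M1 H1] := Hs x (mem_head _ _).
  have [M2 H2] : exists M, forall y, y \in s -> forall t, f y t <= M.
    by apply: IH => y ys; apply: Hs; rewrite in_cons ys orbT.
  exists (Num.max M1 M2) => y; rewrite in_cons => /orP [/eqP -> | ys] t.
    by rewrite le_max H1.
  by rewrite le_max H2 // orbT.
move=> /(_ (finmap.enum_fset F)) []; first by move=> x xF; apply: H.
by move=> M HM; exists M => s /= sF; apply: HM.
Qed.

Lemma finite_preimage_inj (T U : Type) (A : set U) (f : T -> U) :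
  injective f -> finite_set A -> finite_set (f @^-1` A).
Proof.
move=> finj Afin.
apply: (@sub_finite_set _ _ (\bigcup_(y in A) (f @^-1` [set y]))).
  by move=> x Ax; exists (f x).
apply: bigcup_finite => // y _.
have [[x fx]|nx] := pselect (exists x, f x = y).
  apply: (@sub_finite_set _ _ [set x]); last exact: finite_set1.
  by move=> z /= fz; apply: finj; rewrite fz fx.
apply: (@sub_finite_set _ _ set0); last exact: finite_set0.
by move=> z /= fz; apply: nx; exists z.
Qed.

Lemma fsbig_eq_supp (T : choiceType) (P Q : set T) (F : T -> C) :
  (forall y, P y -> ~ Q y -> F y = 0) -> (forall y, Q y -> ~ P y -> F y = 0) ->
  \sum_(y \in P) F y = \sum_(y \in Q) F y.
Proof.
move=> HP HQ.
rewrite (fsbig_widen P (P `|` Q) F); last 2 first.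
- by move=> y Py; left.
- by move=> y [[Py|Qy] nPy] //=; apply: HQ.
rewrite [RHS](fsbig_widen Q (P `|` Q) F) //.
by move=> y [[Py|Qy] nQy] //=; apply: HP.
Qed.

End Finite.

Section Orbit.
Variables (n N : nat) (X : countType) (rho : X -> X -> R)
  (act : Zn n -> X -> X) (reps : 'I_N -> X).
Hypothesis Hact : periodic_action rho act.
Hypothesis Hreps : orbit_reps act reps.

Lemma actNK (c : Zn n) y : act (- c) (act c y) = y.
Proof. by case: Hact => H0 HD _ _; rewrite -HD addNr H0. Qed.

Lemma act_inj a b i j : act a (reps i) = act b (reps j) -> a = b /\ i = j.
Proof.
case: Hact => H0 HD _ Hfree; case: Hreps => _ Hr.
move=> E; have E2 : act (- b + a) (reps i) = reps j.
  by rewrite HD E actNK.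
have ij := Hr _ _ _ E2; split => //.
subst j; have := Hfree _ _ E2 => /eqP; rewrite addrC subr_eq0 => /eqP //.
Qed.

Lemma rho_act a x y : rho (act a x) y = rho x (act (- a) y).
Proof.
case: Hact => _ _ Hiso _.
by rewrite -(Hiso (- a)) actNK.
Qed.

Lemma Uinv_act (g : Zn n * 'I_N -> C) a i :
  Uinv act reps g (act a (reps i)) = g (a, i).
Proof.
rewrite /Uinv; case: pselect => [H|[]]; last by exists (a, i).
case: cid => [[b j]] /= /act_inj [-> ->] //.
Qed.

Lemma Uinv_Uop (f : X -> C) : Uinv act reps (Uop act reps f) = f.
Proof.
apply/funext => x; case: Hreps => Hs _; have [a [j <-]] := Hs x.
by rewrite Uinv_act.
Qed.

Lemma Uop_Uinv (g : Zn n * 'I_N -> C) : Uop act reps (Uinv act reps g) = g.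
Proof. by apply/funext => -[a j]; rewrite /Uop /= Uinv_act. Qed.


Definition phi (q : Zn n * 'I_N) : X := act q.1 (reps q.2).

Lemma phi_bij : set_bij setT setT phi.
Proof.
split.
- by move=> ? ?.
- by move=> [a i] [b j] _ _; rewrite /phi /= => /act_inj [-> ->].
- move=> x _; case: Hreps => Hs _; have [a [j <-]] := Hs x.
  by exists (a, j).
Qed.

Lemma Uop_norm (p : \bar R) (f : X -> C) : lpnorm p (Uop act reps f) = lpnorm p f.
Proof. exact: (lpnorm_bij _ _ phi p f phi_bij). Qed.

Lemma Uinv_norm (p : \bar R) (g : Zn n * 'I_N -> C) : lpnorm p (Uinv act reps g) = lpnorm p g.
Proof. exact: (Sn _ _ p _ _ Uop_Uinv (Uop_norm p)). Qed.

Lemma Uinv_add (f g : Zn n * 'I_N -> C) : Uinv act reps (fun i => f i + g i) =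
  (fun j => Uinv act reps f j + Uinv act reps g j).
Proof. exact: (Sadd _ _ (Uop act reps) _ Uop_Uinv Uinv_Uop (fun f g => erefl)). Qed.

Lemma Uinv_Z (c : C) (f : Zn n * 'I_N -> C) : Uinv act reps (fun i => c * f i) =
  (fun j => c * Uinv act reps f j).
Proof. exact: (SZ _ _ (Uop act reps) _ Uop_Uinv Uinv_Uop (fun c f => erefl)). Qed.

Lemma Phi_bounded (p : \bar R) (A : (X -> C) -> (X -> C)) : bounded_op p A -> bounded_op p (conjU act reps A).
Proof.
exact: (conjT_bounded _ _ p _ _ Uop_Uinv Uinv_Uop (Uop_norm p) (fun f g => erefl) (fun c f => erefl)).
Qed.

Lemma Phi_opnorm (p : \bar R) (A : (X -> C) -> (X -> C)) : opnorm p (conjU act reps A) = opnorm p A.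
Proof. exact: (conjT_opnorm _ _ p _ _ Uop_Uinv Uinv_Uop (Uop_norm p)). Qed.

Definition Psi (B : (Zn n * 'I_N -> C) -> (Zn n * 'I_N -> C)) : (X -> C) -> (X -> C) :=
  fun f => Uinv act reps (B (Uop act reps f)).

Lemma Psi_bounded (p : \bar R) B : bounded_op p B -> bounded_op p (Psi B).
Proof.
exact: (conjT_bounded _ _ p _ _ Uinv_Uop Uop_Uinv (Uinv_norm p) Uinv_add Uinv_Z).
Qed.

Lemma Psi_opnorm (p : \bar R) B : opnorm p (Psi B) = opnorm p B.
Proof. exact: (conjT_opnorm _ _ p _ _ Uinv_Uop Uop_Uinv (Uinv_norm p)). Qed.


Lemma sum_ordT (F : 'I_N -> C) : \sum_(j < N) F j = \sum_(j \in [set: 'I_N]) F j.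
Proof.
rewrite (fsbig_fwiden (index_enum 'I_N) [set: 'I_N] F) //.
- by move=> j _; rewrite /= mem_index_enum.
- exact: index_enum_uniq.
- by move=> j [_ []].
Qed.

Definition psi (al : Zn n) (q : Zn n * 'I_N) : X := act (al - q.1) (reps q.2).

Lemma sum_reindex m al (G : X -> C) :
  \sum_(g \in @box n m) \sum_(j < N) G (act (al - g) (reps j)) =
  \sum_(y \in psi al @` (@box n m `*` setT)) G y.
Proof.
rewrite fsbig_image; last first.
  move=> [g i] [g' j] _ _; rewrite /psi /= => /act_inj [E ->].
  by congr pair; apply: oppr_inj; apply: (addrI al).
rewrite (eq_fsbigr (fun g => \sum_(j \in [set: 'I_N]) G (act (al - g) (reps j)))); last first.
  by move=> g _; rewrite sum_ordT.
by rewrite pair_fsbig //; [exact: box_finite | exact: finite_finset].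
Qed.


Hypothesis Hmet : is_metric rho.
Hypothesis Hball : balls_finite rho.

Lemma phi_inj : injective phi.
Proof. by move=> [a i] [b j]; rewrite /phi /= => /act_inj [-> ->]. Qed.

Lemma rho_shift al b i j :
  rho (act al (reps i)) (act b (reps j)) = rho (act (- b + al) (reps i)) (reps j).
Proof.
case: Hact => _ HD Hiso _.
by rewrite -(Hiso (- b)) actNK -HD.
Qed.

Lemma Phi_band (p : \bar R) A : band_op_X rho p A -> band_op_Z p (conjU act reps A).
Proof.
case=> Hb [k [M [r [Hk Hkr HA]]]].
have [m Hm] : exists m, forall g i j, rho (act g (reps i)) (reps j) <= r -> @box n m g.
  pose B := \bigcup_(j in [set: 'I_N]) [set y | rho (reps j) y <= r].
  have Bfin : finite_set B by apply: bigcup_finite => // j _; apply: Hball.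
  have Pfin : finite_set (phi @^-1` B) by apply: finite_preimage_inj => //; exact: phi_inj.
  have [m Hm] := fin_box _ _ (finite_image fst Pfin).
  exists m => g i j H; apply: Hm; exists (g, i) => //; exists j => //.
  by case: Hmet => _ _ Hsym _; rewrite /= /phi /= Hsym.
exists m, (fun g al => \matrix_(i, j) k (act al (reps i)) (act (al - g) (reps j))).
split.
- by move=> g; exists M => x i j; rewrite mxE; exact: Hk.
- move=> u Hu; rewrite /conjU HA; last by rewrite /in_lp Uinv_norm.
  apply/funext => -[al i]; rewrite /Uop /=.
  set x := act al (reps i).
  pose G := fun y => k x y * Uinv act reps u y.
  rewrite (eq_fsbigr (fun g => \sum_(j < N) G (act (al - g) (reps j)))); last first.
    by move=> g _; apply: eq_bigr => j _; rewrite mxE /G Uinv_act.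
  rewrite sum_reindex; apply: fsbig_eq_supp.
  + move=> y /= Hy Hn; exfalso; apply: Hn.
    case: Hreps => Hs _; have [b [j Hbj]] := Hs y; subst y.
    exists (- b + al, j); first split => //.
      by apply: (Hm _ i j); rewrite -rho_shift.
    by rewrite /psi /= opprD opprK addrCA subrr addr0.
  + move=> y [[g j] [Hg _] <-] Hn; rewrite /G Hkr ?mul0r //.
    by rewrite ltNge; apply/negP.
Qed.


Lemma decomp (x : X) : exists al i, x = act al (reps i).
Proof. by case: Hreps => Hs _; have [a [j <-]] := Hs x; exists a, j. Qed.

Lemma Psi_band (p : \bar R) B : bounded_op p B -> band_op_Z p B ->
  band_op_X rho p (Psi B).
Proof.
move=> Hb [m [a [Ha HB]]].
split; first exact: Psi_bounded.
have [M0 HM0] : exists M, forall g, @box n m g ->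
    forall t : Zn n * 'I_N * 'I_N, normc (a g t.1.1 t.1.2 t.2) <= M.
  apply: (fin_unif _ _ (@box n m)
    (fun g (t : Zn n * 'I_N * 'I_N) => normc (a g t.1.1 t.1.2 t.2))).
    exact: box_finite.
  by move=> g _; have [M HM] := Ha g; exists M => -[[x i] j]; exact: HM.
have [r0 Hr0] : exists r, forall g, @box n m g ->
    forall t : 'I_N * 'I_N, rho (act g (reps t.1)) (reps t.2) <= r.
  apply: (fin_unif _ _ (@box n m)
    (fun g (t : 'I_N * 'I_N) => rho (act g (reps t.1)) (reps t.2))).
    exact: box_finite.
  move=> g _; exists (\big[Num.max/0]_(t : 'I_N * 'I_N) rho (act g (reps t.1)) (reps t.2)).
  by move=> t; apply: le_bigmax.
pose K := fun (q q' : Zn n * 'I_N) =>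
  if pselect (@box n m (q.1 - q'.1)) then a (q.1 - q'.1) q.1 q.2 q'.2 else 0.
pose k := fun x y => Uinv act reps (fun q => Uinv act reps (fun q' => K q q') y) x.
have kE : forall al i b j, k (act al (reps i)) (act b (reps j)) = K (al, i) (b, j).
  by move=> al i b j; rewrite /k !Uinv_act.
exists k, (Num.max M0 0), r0; split.
- move=> x y; have [al [i ->]] := decomp x; have [b [j ->]] := decomp y.
  rewrite kE /K; case: pselect => H.
    by rewrite le_max (HM0 _ H ((al, i), j)).
  by rewrite normc_0 le_max lexx orbT.
- move=> x y; have [al [i ->]] := decomp x; have [b [j ->]] := decomp y.
  rewrite kE /K; case: pselect => //= H Hr; exfalso.
  move: Hr; rewrite rho_shift addrC ltNge => /negP; apply.
  exact: (Hr0 _ H (i, j)).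
- move=> u Hu; rewrite /Psi HB; last by rewrite /in_lp Uop_norm.
  apply/funext => x; have [al [i ->]] := decomp x; rewrite Uinv_act /=.
  set x0 := act al (reps i).
  pose G := fun y => k x0 y * u y.
  rewrite (eq_fsbigr (fun g => \sum_(j < N) G (act (al - g) (reps j)))); last first.
    move=> g /set_mem Hg; apply: eq_bigr => j _; rewrite /G /x0 kE /K /=.
    have E : al - (al - g) = g by rewrite subKr.
    rewrite E; case: pselect => // H; exfalso; exact: H.
  rewrite sum_reindex; apply: fsbig_eq_supp.
  + move=> y [[g j] [Hg _] <-] Hn; exfalso; apply: Hn; rewrite /= /psi /=.
    rewrite rho_shift /=.
    have -> : - (al - g) + al = g by rewrite opprB subrK.
    exact: (Hr0 _ Hg (i, j)).
  + move=> y _; have [b [j ->]] := decomp y => Hn.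
    rewrite /G /x0 kE /K /=; case: pselect => H; last by rewrite mul0r.
    exfalso; apply: Hn; exists (al - b, j) => //.
    by rewrite /psi /= subKr.
Qed.


End Orbit.

Section BandZ.
Local Open Scope ereal_scope.

Lemma lp_fin (I : choiceType) p (f : I -> C) : in_lp p f ->
  exists l : R, lpnorm p f = l%:E /\ (0 <= l)%R.
Proof.
rewrite /in_lp; have := lpnorm_ge0 _ p f.
by case: (lpnorm p f) => [l||] // l0 _; exists l.
Qed.

Lemma opnorm_ge0 (I J : choiceType) p (A : (I -> C) -> (J -> C)) : 0 <= opnorm p A.
Proof. by apply: ereal_sup_ubound; left. Qed.

Lemma in_lpZ (I : choiceType) p (c : C) (f : I -> C) : 1 <= p -> in_lp p f ->
  in_lp p (fun i => (c * f i)%R).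
Proof.
move=> p1 /lp_fin [l [E _]]; rewrite /in_lp.
apply: (le_lt_trans (lpnormZ_le _ _ _ _ p1)); rewrite E -EFinM; exact: ltry.
Qed.

Lemma in_lp_sub (I : choiceType) p (g h : I -> C) : 1 <= p -> in_lp p g -> in_lp p h ->
  in_lp p (fun i => (g i - h i)%R).
Proof.
move=> p1 /lp_fin [lg [Eg g0]] /lp_fin [lh [Eh h0]].
have a0 : (0 <= Num.max lg lh)%R by rewrite le_max g0.
have [K HK] := lp_sub_fin I p _ p1 a0.
rewrite /in_lp; apply: (@le_lt_trans _ _ K%:E); last exact: ltry.
apply: HK.
  by rewrite Eg lee_fin le_max lexx.
by rewrite Eh lee_fin le_max lexx orbT.
Qed.

Lemma in_lp_add (I : choiceType) p (g h : I -> C) : 1 <= p -> in_lp p g -> in_lp p h ->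
  in_lp p (fun i => (g i + h i)%R).
Proof.
move=> p1 Hg Hh.
have -> : (fun i => (g i + h i)%R) = (fun i => (g i - (fun i => (-1) * h i) i)%R).
  by apply/funext => i /=; rewrite mulN1r opprK.
by apply: in_lp_sub => //; apply: in_lpZ.
Qed.

Lemma band_Z_bounded (n N : nat) p (B B' : (Zn n * 'I_N -> C) -> (Zn n * 'I_N -> C))
  (eps : R) : 1 <= p -> bounded_op p B -> band_op_Z p B' ->
  opnorm p (opsub B B') < eps%:E -> bounded_op p B'.
Proof.
move=> p1 [Ba Bz Bl Bn] [m [a [_ HB']]] Heps.
have Hadd : forall f g, in_lp p f -> in_lp p g ->
    B' (fun i => (f i + g i)%R) = (fun i => (B' f i + B' g i)%R).
  move=> f g Hf Hg; rewrite !HB' //; last exact: in_lp_add.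
  apply/funext => xi; rewrite -fsbig_split; last exact: box_finite.
  apply: eq_fsbigr => al _; rewrite -big_split; apply: eq_bigr => j _.
  by rewrite /= mulrDr.
have Hhom : forall (c : C) f, in_lp p f ->
    B' (fun i => (c * f i)%R) = (fun i => (c * B' f i)%R).
  move=> c f Hf; rewrite !HB' //; last exact: in_lpZ.
  apply/funext => xi; rewrite mulr_fsumr; apply: eq_fsbigr => al _.
  rewrite big_distrr; apply: eq_bigr => j _; by rewrite /= mulrCA.
have [b [Eb b0]] : exists b : R, opnorm p B = b%:E /\ (0 <= b)%R.
  by move: Bn (opnorm_ge0 _ _ p B); case: (opnorm p B) => [b||] // _ b0; exists b.
have [d [Ed d0]] : exists d : R, opnorm p (opsub B B') = d%:E /\ (0 <= d)%R.
  have Hlt : opnorm p (opsub B B') < +oo by apply: (lt_le_trans Heps); exact: leey.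
  by move: Hlt (opnorm_ge0 _ _ p (opsub B B')); case: (opnorm p (opsub B B')) => [d||] // _ d0; exists d.
have a0 : (0 <= Num.max b d)%R by rewrite le_max b0.
have [K HK] := lp_sub_fin (Zn n * 'I_N)%type p _ p1 a0.
have bnd : forall f, lpnorm p f <= 1 -> lpnorm p (B' f) <= (Num.max K 0)%:E.
  move=> f Hf.
  have -> : B' f = (fun j => (B f j - opsub B B' f j)%R).
    by apply/funext => j; rewrite /opsub subKr.
  apply: (@le_trans _ _ K%:E); last by rewrite lee_fin le_max lexx.
  apply: HK.
    apply: (@le_trans _ _ b%:E); last by rewrite lee_fin le_max lexx.
    by rewrite -Eb; apply: ereal_sup_ubound; right; exists f.
  apply: (@le_trans _ _ d%:E); last by rewrite lee_fin le_max lexx orbT.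
  by rewrite -Ed; apply: ereal_sup_ubound; right; exists f.
split => //.
- move=> f /[dup] Hf /lp_fin [l [El l0]].
  pose c : C := (((l + 1)^-1)%:C)%C.
  have Hc : in_lp p (fun i => (c * f i)%R) by apply: in_lpZ.
  have Hc1 : lpnorm p (fun i => (c * f i)%R) <= 1.
    apply: (le_trans (lpnormZ_le _ _ _ _ p1)); rewrite El /c normcR -EFinM lee_fin.
    rewrite ger0_norm ?invr_ge0 ?addr_ge0 //.
    rewrite mulrC -(@ler_pM2r _ (l + 1)) ?ltr_wpDl // mul1r -mulrA mulVf ?mulr1 ?lerDl //.
    by rewrite gt_eqF // ltr_wpDl.
  have -> : B' f = (fun i => ((l + 1)%:C%C * B' (fun i => (c * f i)%R) i)%R).
    apply/funext => i; rewrite Hhom // mulrA /c -rmorphM /= mulfV ?mul1r //.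
    by rewrite gt_eqF // ltr_wpDl.
  rewrite /in_lp; apply: (le_lt_trans (lpnormZ_le _ _ _ _ p1)).
  apply: (@le_lt_trans _ _ ((normc ((l + 1)%:C)%C)%:E * (Num.max K 0)%:E)).
    by apply: lee_wpmul2l; [rewrite lee_fin normc_ge0 | exact: bnd].
  by rewrite -EFinM; exact: ltry.
- apply: (@le_lt_trans _ _ (Num.max K 0)%:E); last exact: ltry.
  apply: ge_ereal_sup => _ [/= -> | [f Hf <-]]; first by rewrite lee_fin le_max lexx orbT.
  exact: bnd.
Qed.

End BandZ.
End S.

Theorem proposition3p2 (R : realType) (n N : nat) (X : countType)
  (rho : X -> X -> R) (act : Zn n -> X -> X) (reps : 'I_N -> X) (p : \bar R) :
  is_metric rho -> balls_finite rho ->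
  periodic_action rho act -> orbit_reps act reps ->
  (1 <= p)%E ->
  let Phi := @conjU R n N X act reps in
  [/\
    (forall A, Ap_X rho p A -> @Ap_Z R n N p (Phi A)),
    (forall B, @Ap_Z R n N p B ->
       exists A, Ap_X rho p A /\ (forall g, in_lp p g -> Phi A g = B g)),
    (forall A A', Ap_X rho p A -> Ap_X rho p A' ->
       (forall g, in_lp p g -> Phi A g = Phi A' g) ->
       forall f, in_lp p f -> A f = A' f),
    [/\ (forall A A' f, in_lp p f ->
           Phi (fun u x => A u x + A' u x) f = (fun y => Phi A f y + Phi A' f y)),
        (forall (c : R[i]) A f, in_lp p f ->
           Phi (fun u x => c * A u x) f = (fun y => c * Phi A f y)),
        (forall A A' f, in_lp p f -> Phi (fun u => A (A' u)) f = Phi A (Phi A' f)) &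
        (forall f, in_lp p f -> Phi (fun u => u) f = f)] &
    exists c : R, 0 < c /\
      forall A, Ap_X rho p A ->
        (opnorm p (Phi A) <= c%:E * opnorm p A)%E /\
        (opnorm p A <= c%:E * opnorm p (Phi A))%E].
Proof.
move=> Hmet Hball Hact Hreps p1 Phi.
have UiU := @Uinv_Uop R n N X rho act reps Hact Hreps.
have UUi := @Uop_Uinv R n N X rho act reps Hact Hreps.
have UN := @Uop_norm R n N X rho act reps Hact Hreps.
have UiN := @Uinv_norm R n N X rho act reps Hact Hreps.
have PhB := @Phi_bounded R n N X rho act reps Hact Hreps.
have PhN := @Phi_opnorm R n N X rho act reps Hact Hreps.
have PsB := @Psi_bounded R n N X rho act reps Hact Hreps.
have PsN := @Psi_opnorm R n N X rho act reps Hact Hreps.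
have PhBand := @Phi_band R n N X rho act reps Hact Hreps Hmet Hball.
have PsBand := @Psi_band R n N X rho act reps Hact Hreps.
have Uiadd := @Uinv_add R n N X rho act reps Hact Hreps.
have UiZ := @Uinv_Z R n N X rho act reps Hact Hreps.
split.
- move=> A [HbA HA]; split; first exact: PhB.
  move=> eps e0; have [B' [HB' Hd]] := HA eps e0.
  exists (conjU act reps B'); split; first exact: PhBand.
  by rewrite -[opsub _ _]/(conjU act reps (opsub A B')) PhN.
- move=> B [HbB HB]; exists (@Psi R n N X act reps B); split.
    split; first exact: PsB.
    move=> eps e0; have [B' [HB' Hd]] := HB eps e0.
    exists (@Psi R n N X act reps B'); split.
      apply: PsBand => //; exact: (@band_Z_bounded R n N p B B' eps p1 HbB HB' Hd).
    rewrite -(@conjT_opsub R _ _ (Uinv act reps) (Uop act reps) Uiadd UiZ B B') -/(@Psi R n N X act reps (opsub B B')).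
    by rewrite PsN.
  by move=> g Hg; rewrite /Phi /conjU /Psi !UUi.
- move=> A A' _ _ H f Hf.
  have := H (Uop act reps f); rewrite /Phi /conjU UiU => E.
  by rewrite -[A f]UiU E ?UiU // /in_lp UN.
- split.
  + by [].
  + by [].
  + by move=> A A' f Hf; rewrite /Phi /conjU UiU.
  + by move=> f Hf; rewrite /Phi /conjU UUi.
- exists 1; split => // A _; rewrite PhN mul1e; split => //.
Qed.
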